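(* In any finite discounted stochastic game, the following are equivalent: (a) $\bm{\Pi}_{\rm cumber}=\bm{\Pi}_{\rm eq}$; (b) the game is weakly acyclic under multi-DM strict best replies. Moreover, in any finite discounted stochastic game, for every $\bm{\pi}\in\bm{\Pi}\setminus\bm{\Pi}_{\rm cumber}$ there is a multi-DM strict best reply path starting at $\bm{\pi}$ and ending in $\bm{\Pi}_{\rm cumber}$.
   Context: Game setup: finite discounted stochastic game with $N$ decision makers, finite state set $\mathbb{X}$, finite action sets $\mathbb{U}^i$, discount factors $\beta^i\in(0,1)$, costs $c^i:\mathbb{X}\times\mathbb{U}\to\mathbb{R}$, transition kernel $P$. $\Pi^i$ = set of maps $\mathbb{X}\to\mathbb{U}^i$, $\bm{\Pi}=\times_i\Pi^i$, $\bm{\pi}=(\pi^i,\bm{\pi}^{-i})$; $J^i_x(\bm{\pi})=E[\sum_{t\ge0}(\beta^i)^tc^i(x_t,\bm{\pi}(x_t))\mid x_0=x]$ with $x_{t+1}\sim P(\cdot\mid x_t,\bm{\pi}(x_t))$. $\pi^i$ is a best reply to $\bm{\pi}^{-i}$ if $J^i_x(\pi^i,\bm{\pi}^{-i})=\min_{\sigma^i\in\Pi^i}J^i_x(\sigma^i,\bm{\pi}^{-i})$ $\forall x$; a best reply $\tilde\pi^i$ is a strict best reply with respect to $\bm{\pi}=(\pi^i,\bm{\pi}^{-i})$ if $J^i_x(\tilde\pi^i,\bm{\pi}^{-i})<J^i_x(\pi^i,\bm{\pi}^{-i})$ for some $x$. $\bm{\Pi}_{\rm eq}=\{\bm{\pi}:\pi^i$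 is a best reply to $\bm{\pi}^{-i}\ \forall i\}$. A multi-DM strict best reply path is a sequence $\bm{\pi}_0,\bm{\pi}_1,\dots$ with $\bm{\pi}_k\ne\bm{\pi}_{k+1}$ and, for each $i$ with $\pi^i_{k+1}\ne\pi^i_k$, $\pi^i_{k+1}$ a strict best reply with respect to $\bm{\pi}_k$. The game is weakly acyclic (under multi-DM strict best replies) if from every $\bm{\pi}\in\bm{\Pi}$ there is a multi-DM strict best reply path starting at $\bm{\pi}$ and ending at some element of $\bm{\Pi}_{\rm eq}$ (a path of length zero is allowed if $\bm{\pi}\in\bm{\Pi}_{\rm eq}$). For $\bm{\pi}\in\bm{\Pi}$, $\widetilde{BR}(\bm{\pi})=\{\tilde{\bm{\pi}}\in\bm{\Pi}:$ for every $i$, $\tilde\pi^i\ne\pi^i\Rightarrow\tilde\pi^i$ is a strict best reply with respect to $\bm{\pi}\}$. A nonempty $\tilde{\bm{\Pi}}\subseteq\bm{\Pi}$ is a cumber set if $\bm{\pi}\in\tilde{\bm{\Pi}}\Rightarrow\widetilde{BR}(\bm{\pi})\subseteq\tilde{\bm{\Pi}}$; it is minimal if it properly contains no other cumber set. $\bm{\Pi}_{\rm cumber}$ is the union of all minimal cumber sets. *)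

(* Defs.v *)
From mathcomp Require Import all_boot.
From Stdlib Require Import Reals ClassicalEpsilon.

Set Implicit Arguments.
Unset Strict Implicit.
Unset Printing Implicit Defensive.

Local Open Scope R_scope.

Section Game.
Variable N : nat.
Variable X : finType.
Variable U : 'I_N -> finType.
Variable beta : 'I_N -> R.
Variable c : 'I_N -> X -> (forall i, U i) -> R.
Variable P : X -> (forall i, U i) -> X -> R.         (* transition kernel P(y | x, u) *)

Definition sumR (T : finType) (f : T -> R) : R := \big[Rplus/0]_(t : T) f t.

Definition is_kernel : Prop :=
  (forall x u y, 0 <= P x u y) /\ (forall x u, sumR (fun y => P x u y) = 1).

(* stationary deterministic policy of DM i: a map X -> U^i; joint policy *)
Definition policy (i : 'I_N) := X -> U i.
Definition profile := forall i : 'I_N, policy i.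

Definition joint (pi : profile) (x : X) : forall i, U i := fun i => pi i x.

Fixpoint dist (pi : profile) (x0 : X) (t : nat) : X -> R :=
  match t with
  | O => fun y => if y == x0 then 1 else 0
  | S t' => fun y => sumR (fun z => dist pi x0 t' z * P z (joint pi z) y)
  end.

Definition cost_term (i : 'I_N) (pi : profile) (x0 : X) (t : nat) : R :=
  (beta i) ^ t * sumR (fun y => dist pi x0 t y * c i y (joint pi y)).

Definition J (i : 'I_N) (pi : profile) (x0 : X) : R :=
  epsilon (inhabits 0) (fun v => infinite_sum (cost_term i pi x0) v).

Definition upd (pi : profile) (i : 'I_N) (s : policy i) : profile := dfwith pi s.

Definition best_reply (i : 'I_N) (s : policy i) (pi : profile) : Prop :=
  forall x, forall s' : policy i, J i (upd pi s) x <= J i (upd pi s') x.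

Definition strict_best_reply (i : 'I_N) (s : policy i) (pi : profile) : Prop :=
  best_reply s pi /\ exists x, J i (upd pi s) x < J i pi x.

Definition is_eq (pi : profile) : Prop := forall i, best_reply (pi i) pi.

Definition BRt (pi pi' : profile) : Prop :=
  forall i, pi' i <> pi i -> strict_best_reply (pi' i) pi.

Definition sbr_step (pi pi' : profile) : Prop := pi <> pi' /\ BRt pi pi'.

Inductive sbr_path : profile -> profile -> Prop :=
  | sbr_path_nil : forall pi, sbr_path pi pi
  | sbr_path_cons : forall pi pi' pi'', sbr_step pi pi' -> sbr_path pi' pi'' ->
      sbr_path pi pi''.

Definition weakly_acyclic : Prop :=
  forall pi, exists pe, sbr_path pi pe /\ is_eq pe.

Definition cumber_set (C : profile -> Prop) : Prop :=
  (exists pi, C pi) /\ (forall pi pi', C pi -> BRt pi pi' -> C pi').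

Definition minimal_cumber_set (C : profile -> Prop) : Prop :=
  cumber_set C /\
  forall C', cumber_set C' -> (forall p, C' p -> C p) ->
    ~ (exists p, C p /\ ~ C' p).

Definition in_cumber (pi : profile) : Prop :=
  exists C, minimal_cumber_set C /\ C pi.

End Game.

(* Main.v *)
Require Import Defs.
From mathcomp Require Import all_boot.
From Stdlib Require Import Reals Lra Classical ClassicalEpsilon FunctionalExtensionality.

Set Implicit Arguments.
Section Proofs.
Variable N : nat.
Variable X : finType.
Variable U : 'I_N -> finType.
Variable beta : 'I_N -> R.
Variable c : 'I_N -> X -> (forall i, U i) -> R.
Variable P : X -> (forall i, U i) -> X -> R.

Notation prof := (@profile N X U).
Notation Reach := (sbr_path beta c P).

Lemma upd_self (p : prof) i : upd p (p i) = p.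
Proof.
apply: functional_extensionality_dep => j.
rewrite /upd; case: (eqVneq i j) => [<-|nij]; first by rewrite dfwith_in.
by rewrite dfwith_out.
Qed.

Lemma eq_BRt (p p' : prof) : is_eq beta c P p -> BRt beta c P p p' -> p' = p.
Proof.
move=> He Hb; apply: functional_extensionality_dep => i.
case: (classic (p' i = p i)) => // Hne; exfalso.
have [_ [x Hx]] := Hb i Hne.
have := He i x (p' i); rewrite upd_self; lra.
Qed.

Lemma path_snoc (p q r : prof) : Reach p q -> sbr_step beta c P q r -> Reach p r.
Proof.
elim=> [pi|pi pi' pi'' Hs _ IH] Hqr.
  by apply: sbr_path_cons Hqr (sbr_path_nil _ _ _ _).
exact: sbr_path_cons Hs (IH Hqr).
Qed.

Lemma path_trans (p q r : prof) : Reach p q -> Reach q r -> Reach p r.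
Proof.
elim=> [//|pi pi' pi'' Hs _ IH] Hqr.
exact: sbr_path_cons Hs (IH Hqr).
Qed.

Lemma reach_closed (p q q' : prof) : Reach p q -> BRt beta c P q q' -> Reach p q'.
Proof.
move=> H Hb; case: (classic (q = q')) => [<-//|Hne].
exact: path_snoc H (conj Hne Hb).
Qed.

Lemma reach_cumber (p : prof) : cumber_set beta c P (Reach p).
Proof.
split; first by exists p; apply: sbr_path_nil.
move=> q q' H Hb; exact: reach_closed H Hb.
Qed.

Lemma cumber_path (C : prof -> Prop) p q :
  cumber_set beta c P C -> C p -> Reach p q -> C q.
Proof.
move=> [_ HC] Hp H; elim: H Hp => [//|pi pi' pi'' [_ Hb] _ IH] Hp.
exact: IH (HC _ _ Hp Hb).
Qed.

Definition T := {dffun forall i : 'I_N, {ffun X -> U i}}.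
Definition enc (p : prof) : T := [ffun i => [ffun x => p i x]].

Lemma enc_inj : injective enc.
Proof.
move=> p q H; apply: functional_extensionality_dep => i.
apply: functional_extensionality => x.
have := congr1 (fun f : T => f i x) H; rewrite /enc /= !ffunE.
by [].
Qed.

Definition bP (Q : Prop) : bool := if excluded_middle_informative Q then true else false.
Lemma bPP (Q : Prop) : bP Q <-> Q.
Proof. by rewrite /bP; case: excluded_middle_informative. Qed.

Definition img (p : prof) : {set T} := [set t | bP (exists q, Reach p q /\ enc q = t)].
Definition m (p : prof) : nat := #|img p|.

Lemma m_lt (p q r : prof) : Reach p q -> Reach p r -> ~ Reach q r -> (m q < m p)%N.
Proof.
move=> Hq Hr Hn; apply: proper_card; apply/properP; split.
  apply/subsetP => t; rewrite !inE => /bPP [q' [H1 H2]].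
  apply/bPP; exists q'; split => //; exact: path_trans Hq H1.
exists (enc r); first by rewrite inE; apply/bPP; exists r.
rewrite inE; apply/negP => /bPP [q' [H1 /enc_inj H2]]; apply: Hn; by rewrite -H2.
Qed.

Lemma exists_min n : forall p, (m p <= n)%N ->
  exists s, Reach p s /\ minimal_cumber_set beta c P (Reach s).
Proof.
elim: n => [|n IH] p Hm.
- exfalso. have: (0 < m p)%N.
    rewrite /m card_gt0; apply/set0Pn; exists (enc p); rewrite inE.
    apply/bPP; exists p; split => //; exact: sbr_path_nil.
  by rewrite leqn0 in Hm; rewrite (eqP Hm).
- case: (classic (minimal_cumber_set beta c P (Reach p))) => Hmin.
    by exists p; split => //; apply: sbr_path_nil.
  have: exists C', cumber_set beta c P C' /\ (forall x, C' x -> Reach p x) /\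
        exists r, Reach p r /\ ~ C' r.
    apply: NNPP => Hno; apply: Hmin; split; first exact: reach_cumber.
    move=> C' HC' Hsub Hex; apply: Hno; exists C'; split => //; split => //.
  move=> [C' [HC' [Hsub [r [Hr HnC]]]]].
  have [[q Hq] _] := HC'.
  have Hlt : (m q < m p)%N.
    apply: (m_lt (Hsub _ Hq) Hr) => Hqr; apply: HnC; exact: cumber_path HC' Hq Hqr.
  have [s [Hs Hsm]] := IH q (ltnSE (leq_trans Hlt Hm)).
  exists s; split => //; exact: path_trans (Hsub _ Hq) Hs.
Qed.

Lemma to_cumber (p : prof) : exists p', Reach p p' /\ in_cumber beta c P p'.
Proof.
have [s [Hs Hm]] := @exists_min (m p) p (leqnn _).
exists s; split => //; exists (Reach s); split => //; exact: sbr_path_nil.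
Qed.

Lemma eq_in_cumber (p : prof) : is_eq beta c P p -> in_cumber beta c P p.
Proof.
move=> He; exists (fun q => q = p); split => //.
have Hc : cumber_set beta c P (fun q => q = p).
  split; first by exists p.
  by move=> q q' -> Hb; apply: eq_BRt Hb.
split => // C' [[q Hq] _] Hsub [r [-> Hn]]; apply: Hn.
by have := Hsub _ Hq => Hqp; rewrite -Hqp.
Qed.

End Proofs.

Unset Implicit Arguments.
Local Open Scope R_scope.

Theorem mainTheorem5 (N : nat) (X : finType) (U : 'I_N -> finType)
  (beta : 'I_N -> R) (c : 'I_N -> X -> (forall i, U i) -> R)
  (P : X -> (forall i, U i) -> X -> R)
  (hbeta : forall i, 0 < beta i < 1)
  (hP : is_kernel P) :
  ((forall pi, in_cumber beta c P pi <-> is_eq beta c P pi)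
     <-> weakly_acyclic beta c P) /\
  (forall pi, ~ in_cumber beta c P pi ->
     exists pi', sbr_path beta c P pi pi' /\ in_cumber beta c P pi').
Proof.
split; last by move=> pi _; apply: to_cumber.
split.
- move=> H pi; have [p' [Hp Hc]] := to_cumber beta c P pi.
  by exists p'; split => //; apply/H.
- move=> Hwa pi; split; last exact: eq_in_cumber.
  move=> [C [[HC Hmin] HCpi]].
  have [pe [Hpath He]] := Hwa pi.
  have HCpe := cumber_path HC HCpi Hpath.
  have Hc1 : cumber_set beta c P (fun q => q = pe).
    split; first by exists pe.
    by move=> q q' -> Hb; apply: eq_BRt Hb.
  have Heq : pi = pe.
    apply: NNPP => Hne; apply: (Hmin _ Hc1); first by move=> q ->.
    by exists pi.
  by rewrite Heq.
Qed.
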